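(* Let $\mathbf{x}$ be a parking function of length $n$ and run Algorithm A on $\mathbf{x}$. The algorithm terminates, every index $j\in[n]$ is the up feeder of exactly one up step, and the source priority vector $s(\mathbf{x})$ is a permutation of $(-1,-2,\dots,-n)$; moreover, for $i\ne j$, $|s_i(\mathbf{x})|>|s_j(\mathbf{x})|$ if and only if $i$ was the up feeder of an up step occurring before the up step with up feeder $j$.
   Context: A parking function of length $n$ is a sequence of positive integers which, sorted increasingly as $x_{(1)}\le\dots\le x_{(n)}$, satisfies $x_{(k)}\le k$ for all $k$. Algorithm A: Input a parking function $\mathbf{x}\in\mathbb{Z}_{>0}^n$; start with the vertex set $[n]$ and no edges, and set $\mathbf{y}:=\mathbf{x}-(1,\dots,1)$. Repeat the following. (Up step) If some $y_k=0$: let $j:=\max\{k: y_k=0\}$ (the up feeder); for every $k>j$ with $y_k>0$, introduce the directed (up) edge $j\rightarrow k$ and replace $y_k$ by $y_k-1$; replace every entry that was negative at the start of this step by that entry minus $1$; set $y_j:=-1$; repeat. (Down step) Else, if some $y_k>0$: among all indices $j$ such that there is $k<j$ with $y_k>0$ and the edge $k\leftarrow j$ not yet introduced (down feeder candidates), choose $j$ with minimal $y_j$ (the down feeder); for every $k<j$ with $y_k>0$, introduce the directed (down) edge $k\leftarrow j$ (directed from $j$ to $k$) and replace $y_k$ by $y_k-1$; repeat. (Stop) Else (all $y_k<0$): join every pair of vertices not yet joined by an undirected (downish) edge and stop. Output: the mixed graph $P(\mathbf{x})$ and the source priority vector $s(\mathbf{x}):=(y_1,\dots,y_n)$ (final values).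 *)

(* Defs.v *)
(* Algorithm A of the paper, modelled as a (possibly
   nondeterministic, because of ties in the down-feeder choice) labelled
   step relation on states.  Indices are 'I_n, i.e. 0-based: vertex i of
   the paper is the ordinal i-1. *)
From HB Require Import structures.
From mathcomp Require Import all_boot all_order all_algebra.
Set Implicit Arguments. Unset Strict Implicit. Unset Printing Implicit Defensive.
Import Order.TTheory GRing.Theory Num.Theory.

Definition parking_function (n : nat) (x : 'I_n -> nat) : Prop :=
  let s := sort leq [seq x i | i <- enum 'I_n] in
  forall k : nat, k < n -> 0 < nth 0 s k <= k.+1.

(* state: the vector y, and the set of down edges introduced so far;
   a pair (j,k) in D means the down edge k <- j (directed from j to k).
   Up edges and the final undirected edges never influence the run or
   the output vector s(x), so they are not recorded. *)
Definition state (n : nat) : Type := ({ffun 'I_n -> int} * {set 'I_n * 'I_n})%type.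

Inductive label (n : nat) : Type :=
| UpStep of 'I_n
| DownStep of 'I_n.

Definition init_state (n : nat) (x : 'I_n -> nat) : state n :=
  ([ffun k => (x k)%:Z - 1]%R, set0).

Definition down_candidate n (st : state n) (j : 'I_n) : Prop :=
  exists k : 'I_n, [/\ k < j, (0 < st.1 k)%R & (j, k) \notin st.2].

Definition astep n (st : state n) (l : label n) (st' : state n) : Prop :=
  match l with
  | UpStep j =>
      st.1 j = 0%R /\ (forall k : 'I_n, st.1 k = 0%R -> k <= j) /\
      st'.2 = st.2 /\
      (forall k : 'I_n, st'.1 k =
         if k == j then (-1)%R
         else if (j < k) && (0 < st.1 k)%R then (st.1 k - 1)%R
         else if (st.1 k < 0)%R then (st.1 k - 1)%R
         else st.1 k)
  | DownStep j =>
      (forall k : 'I_n, st.1 k <> 0%R) /\ (exists k : 'I_n, (0 < st.1 k)%R) /\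
      down_candidate st j /\
      (forall j' : 'I_n, down_candidate st j' -> (st.1 j <= st.1 j')%R) /\
      st'.2 = st.2 :|: [set p : 'I_n * 'I_n | (p.1 == j) && (p.2 < j) && (0 < st.1 p.2)%R] /\
      (forall k : 'I_n, st'.1 k =
         if (k < j) && (0 < st.1 k)%R then (st.1 k - 1)%R else st.1 k)
  end.

Definition stopped n (st : state n) : Prop := forall k : 'I_n, (st.1 k < 0)%R.

Fixpoint is_run n (st : state n) (r : seq (label n * state n)) : Prop :=
  match r with
  | [::] => True
  | (l, st') :: r' => astep st l st' /\ is_run st' r'
  end.

Definition last_state n (st : state n) (r : seq (label n * state n)) : state n :=
  last st (map snd r).

Definition is_up_with n (j : 'I_n) (l : label n) : bool :=
  if l is UpStep k then k == j else false.

(* Main.v *)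
Require Import Defs.
From HB Require Import structures.
From mathcomp Require Import all_boot all_order all_algebra.
From mathcomp Require Import zify.
Import Order.TTheory GRing.Theory Num.Theory.

Section Part1.
Set Implicit Arguments. Unset Strict Implicit. Unset Printing Implicit Defensive.

Lemma pf_bounds n (x : 'I_n -> nat) : parking_function x ->
  forall i, 0 < x i <= n.
Proof.
move=> Hp i.
set s := sort leq [seq x i | i <- enum 'I_n].
have Hin : x i \in s by rewrite mem_sort map_f // mem_enum.
have Hsz : size s = n by rewrite size_sort size_map size_enum_ord.
have Hidx : index (x i) s < n by rewrite -Hsz index_mem.
have := Hp _ Hidx; rewrite -/s nth_index //.
case/andP=> H1 H2; rewrite H1 /=; exact: leq_trans H2 Hidx.
Qed.

Definition upf n (l : label n) : option 'I_n := if l is UpStep k then Some k else None.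
Definition ups n (ls : seq (label n)) : seq 'I_n := pmap (@upf n) ls.

Definition Sset n (st : state n) (k : 'I_n) : {set 'I_n} :=
  [set j : 'I_n | ((j < k) && (st.1 j < 0)%R) || ((k < j) && ((j,k) \in st.2))].

Definition Inv n (st : state n) (U : seq 'I_n) : Prop :=
  [/\ uniq U,
      forall k, (st.1 k < 0)%R = (k \in U),
      forall k, k \in U -> st.1 k = (- (size U - index k U)%:Z)%R &
      forall k, (0 <= st.1 k)%R -> (st.1 k + #|Sset st k|%:Z <= (n.-1)%:Z)%R].

Local Open Scope ring_scope.

Lemma neg_up n (st st' : state n) j : astep st (UpStep j) st' ->
  forall i, (st'.1 i < 0) = (i == j) || (st.1 i < 0).
Proof.
case=> [Hj [Hmax [HD Hf]]] i; rewrite Hf.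
case: eqP => [->|ne] //=.
case: ifP => [/andP[_ H]|_]; first by apply/idP/idP; lia.
case: ifP => H; first by apply/idP/idP; lia.
by rewrite H.
Qed.

Lemma neg_down n (st st' : state n) j : astep st (DownStep j) st' ->
  forall i, (st'.1 i < 0) = (st.1 i < 0).
Proof.
case=> [_ [_ [_ [_ [_ Hf]]]]] i; rewrite Hf.
case: ifP => [/andP[_ H]|_] //; apply/idP/idP; lia.
Qed.

Lemma inv_step n (st st' : state n) l U : Inv st U -> astep st l st' ->
  Inv st' (U ++ ups [:: l]).
Proof.
case=> [HU Hneg Hval Hcnt]; case: l => j /=.
- move=> Hs; have Hn := neg_up Hs.
  case: Hs => [Hj [Hmax [HD Hf]]].
  have jU : j \notin U by rewrite -Hneg Hj ltxx.
  split.
  + by rewrite cat_uniq HU /= orbF jU.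
  + by move=> k; rewrite Hn mem_cat Hneg inE orbC.
  + move=> k; rewrite mem_cat inE size_cat /= index_cat.
    case: (k =P j) => [->|ne] /=.
    * by rewrite (negbTE jU) eqxx Hf eqxx /=; lia.
    * rewrite orbF => kU; rewrite kU Hf.
      have /eqP/negbTE -> := ne.
      have yk := Hval _ kU; have kl : (index k U < size U)%N by rewrite index_mem.
      have ng : st.1 k < 0 by rewrite Hneg.
      rewrite ng; case: ifP => _; lia.
  + move=> k H0.
    have kj : k != j by apply/eqP=> E; move: H0; rewrite Hf E eqxx.
    have yk0 : 0 <= st.1 k.
      rewrite leNgt; apply/negP => ng.
      by move: (Hn k); rewrite ng orbT ltNge H0.
    move: H0 (Hcnt k yk0); rewrite Hf (negbTE kj).
    have -> : (st.1 k < 0) = false by rewrite ltNge yk0.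
    case: ifP => [/andP[jk pk] _ | Hc _].
    * have : (#|Sset st' k| <= #|Sset st k|.+1)%N.
        apply: leq_trans (_ : #|j |: Sset st k| <= _)%N; last by rewrite cardsU1 -add1n leq_add2r leq_b1.
        apply: subset_leq_card; apply/subsetP => i; rewrite !inE Hn HD.
        by case: (i =P j) => [->|_]; rewrite ?eqxx //=.
      lia.
    * have kj' : (k < j)%N.
        have [//|jk] := ltnP k j.
        have : (j < k)%N by rewrite ltn_neqAle jk andbT eq_sym; apply: contra kj => /eqP /val_inj ->.
        move=> jk'; move: Hc; rewrite jk' /=.
        move=> /negbT; rewrite -leNgt => yk.
        have yk' : st.1 k = 0 by apply/eqP; rewrite eq_le yk yk0.
        by have := Hmax _ yk'; rewrite leqNgt jk'.
      have : (#|Sset st' k| <= #|Sset st k|)%N.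
        apply: subset_leq_card; apply/subsetP => i; rewrite !inE Hn HD.
        case: (i =P j) => [->|_] //=.
        by rewrite ltnNge (ltnW kj').
      lia.
- move=> Hs; have Hn := neg_down Hs.
  case: Hs => [Hnz [Hpos [Hc [Hmin [HD Hf]]]]].
  rewrite cats0; split => //.
  + by move=> k; rewrite Hn.
  + move=> k kU; rewrite Hf.
    have ng : st.1 k < 0 by rewrite Hneg.
    have -> : (0 < st.1 k) = false by rewrite ltNge ltW.
    by rewrite andbF Hval.
  + move=> k H0.
    have yk0 : 0 <= st.1 k by rewrite leNgt -Hn -leNgt.
    move: H0 (Hcnt k yk0); rewrite Hf.
    case: ifP => [/andP[jk pk] _ | Hc' _].
    * have : (#|Sset st' k| <= #|Sset st k|.+1)%N.
        apply: leq_trans (_ : #|j |: Sset st k| <= _)%N; last by rewrite cardsU1 -add1n leq_add2r leq_b1.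
        apply: subset_leq_card; apply/subsetP => i; rewrite !inE Hn HD !inE /=.
        case: (i =P j) => [->|_] //=; by rewrite ?orbF.
      lia.
    * have : (#|Sset st' k| <= #|Sset st k|)%N.
        apply: subset_leq_card; apply/subsetP => i; rewrite !inE Hn HD !inE /=.
        by rewrite -andbA Hc' andbF orbF.
      lia.
Qed.

End Part1.

Section Part2.
Set Implicit Arguments. Unset Strict Implicit. Unset Printing Implicit Defensive.

Lemma ups_cat n (a b : seq (label n)) : ups (a ++ b) = ups a ++ ups b.
Proof. by rewrite /ups pmap_cat. Qed.

Lemma inv_run n (r : seq (label n * state n)) : forall st U, Inv st U -> is_run st r ->
  Inv (last_state st r) (U ++ ups (map fst r)).
Proof.
elim: r => [|[l st'] r IH] st U HI /=; first by rewrite cats0.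
case=> Hs Hr.
have := IH st' _ (inv_step HI Hs) Hr.
by rewrite -catA -ups_cat.
Qed.

Local Open Scope ring_scope.

Lemma inv_init n (x : 'I_n -> nat) : parking_function x -> Inv (init_state x) [::].
Proof.
move=> Hp; have Hb := pf_bounds Hp.
have Hy : forall k, (init_state x).1 k = (x k)%:Z - 1 by move=> k; rewrite ffunE.
split => //.
- by move=> k; rewrite Hy in_nil; have := Hb k => ?; apply: negbTE; rewrite -leNgt; lia.
- move=> k _.
  have -> : Sset (init_state x) k = set0.
    apply/setP => i; rewrite !inE Hy /= andbF orbF.
    have -> : ((x i)%:Z - 1 < 0) = false by apply: negbTE; rewrite -leNgt; have := Hb i; lia.
    by rewrite andbF.
  rewrite cards0 Hy; have := Hb k; have := ltn_ord k.
  move=> *; lia.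
Qed.

Definition hm (z : int) : int := if 0 <= z then z + 1 else 0.
Definition mu n (st : state n) : int := \sum_(k : 'I_n) hm (st.1 k).

Lemma hm_ge0 z : 0 <= hm z.
Proof. rewrite /hm; case: ifP => // H; lia. Qed.

Lemma hm_le a b : a <= b -> hm a <= hm b.
Proof. rewrite /hm; case: ifP; case: ifP => // *; lia. Qed.

Lemma hm_lt a b : a < b -> 0 <= b -> hm a < hm b.
Proof. rewrite /hm; case: ifP; case: ifP => // *; lia. Qed.

Lemma mu_ge0 n (st : state n) : 0 <= mu st.
Proof. by apply: sumr_ge0 => k _; apply: hm_ge0. Qed.

Lemma mu_dec n (st st' : state n) : (forall k, st'.1 k <= st.1 k) ->
  (exists k0, st'.1 k0 < st.1 k0 /\ 0 <= st.1 k0) -> mu st' < mu st.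
Proof.
move=> Hle [k0 [Hlt H0]].
rewrite /mu (bigD1 k0) //= [X in _ < X](bigD1 k0) //=.
apply: ltr_leD; first exact: hm_lt.
by apply: ler_sum => i _; apply: hm_le.
Qed.

Lemma mu_step n (st st' : state n) l : astep st l st' -> mu st' < mu st.
Proof.
case: l => j /=.
- case=> [Hj [Hmax [HD Hf]]]; apply: mu_dec.
  + move=> k; rewrite Hf; case: eqP => [->|_]; first by rewrite Hj.
    case: ifP => _; first lia. case: ifP => _ //; lia.
  + by exists j; rewrite Hf eqxx Hj.
- case=> [Hnz [Hpos [[k0 [k0j pk0 _]] [Hmin [HD Hf]]]]]; apply: mu_dec.
  + move=> k; rewrite Hf; case: ifP => _ //; lia.
  + exists k0; rewrite Hf k0j pk0 /=; split; lia.
Qed.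

Lemma acc_mu n : forall (m : nat) (st : state n), mu st <= m%:Z ->
  Acc (fun b a : state n => exists l, astep a l b) st.
Proof.
elim=> [|m IH] st H; constructor => st' [l Hs]; have := mu_step Hs.
- have := mu_ge0 st'; lia.
- move=> H'; apply: IH; lia.
Qed.

End Part2.

Section Part3.
Set Implicit Arguments. Unset Strict Implicit. Unset Printing Implicit Defensive.
Local Open Scope ring_scope.

Definition candb n (st : state n) (j : 'I_n) : bool :=
  [exists k : 'I_n, [&& (k < j)%N, 0 < st.1 k & (j, k) \notin st.2]].

Lemma candP n (st : state n) j : reflect (down_candidate st j) (candb st j).
Proof.
apply: (iffP existsP) => [[k /and3P[a b c]]|[k [a b c]]]; exists k => //.
by rewrite a b c.
Qed.

Lemma progress n (st : state n) U : Inv st U -> ~ stopped st ->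
  exists l st', astep st l st'.
Proof.
case=> [HU Hneg Hval Hcnt] Hns.
have [k0 Hk0] : exists k0, 0 <= st.1 k0.
  case: (boolP [exists k, 0 <= st.1 k]) => [/existsP//|/existsP Hn].
  by exfalso; apply: Hns => k; rewrite ltNge; apply/negP => H; apply: Hn; exists k.
case: (boolP [exists k, st.1 k == 0]) => [/existsP [kz Hkz]|/existsP Hnz].
- have [j /eqP Hj Hmax] := @arg_maxnP _ kz (fun i => st.1 i == 0) (fun i : 'I_n => nat_of_ord i) Hkz.
  exists (UpStep j).
  exists ([ffun k : 'I_n => if k == j then -1
            else if (j < k)%N && (0 < st.1 k) then st.1 k - 1
            else if st.1 k < 0 then st.1 k - 1 else st.1 k], st.2).
  split => //; split; last by split => // k; rewrite ffunE.
  by move=> k /eqP Hk; apply: Hmax.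
- have Hnz' : forall k, st.1 k <> 0 by move=> k Hk; apply: Hnz; exists k; rewrite Hk.
  have Hp : 0 < st.1 k0 by rewrite lt_neqAle Hk0 andbT eq_sym; apply/eqP; apply: Hnz'.
  case: (boolP [exists j, candb st j]) => [/existsP [jc Hjc]|/existsP Hnc].
  + have [j Hj Hmin] := arg_minP (fun i : 'I_n => st.1 i) Hjc.
    exists (DownStep j).
    exists ([ffun k : 'I_n => if (k < j)%N && (0 < st.1 k) then st.1 k - 1 else st.1 k],
            st.2 :|: [set p : 'I_n * 'I_n | (p.1 == j) && (p.2 < j)%N && (0 < st.1 p.2)]).
    split => //; split; first by exists k0.
    split; first exact/candP.
    split; first by move=> j' /candP Hj'; apply: Hmin.
    by split => // k; rewrite ffunE.
  + exfalso.
    have [k Hk Hkmin] := @arg_minnP _ k0 (fun i => 0 < st.1 i) (fun i : 'I_n => nat_of_ord i) Hp.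
    have HS : Sset st k = [set~ k].
      apply/setP => i; rewrite !inE.
      case: (ltngtP i k) => [ik|ki|/val_inj ->]; rewrite ?ltnn //=.
      * have -> : (i != k) = true by apply/eqP => E; move: ik; rewrite E ltnn.
        rewrite orbF.
        have : ~~ (0 < st.1 i) by apply/negP => Hi; have := Hkmin _ Hi; rewrite leqNgt ik.
        have := Hnz' i; rewrite -leNgt => ? ?; rewrite lt_neqAle; apply/andP; split => //.
        by apply/eqP.
      * have ik : i != k by apply/eqP => E; move: ki; rewrite E ltnn.
        rewrite ik /=.
        apply/negPn/negP => Hd; apply: Hnc; exists i; apply/existsP; exists k.
        by rewrite ki Hk Hd.
      * by rewrite eqxx.
    have := Hcnt k (ltW Hk); rewrite HS cardsC1 card_ord; lia.
Qed.

End Part3.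

Section Part4.
Set Implicit Arguments. Unset Strict Implicit. Unset Printing Implicit Defensive.

Lemma count_ups n (ls : seq (label n)) j : count (is_up_with j) ls = count_mem j (ups ls).
Proof. by elim: ls => [|[k|k] ls IH] //=; rewrite IH. Qed.

Lemma ups_in n (ls : seq (label n)) d j : j \in ups ls ->
  exists q, (q < size ls)%N /\ nth d ls q = UpStep j.
Proof.
elim: ls => [|[k|k] ls IH] //=.
- rewrite inE => /orP [/eqP ->|/IH [q [Hq E]]]; first by exists 0%N.
  by exists q.+1.
- by move=> /IH [q [Hq E]]; exists q.+1.
Qed.

Lemma ups_notin n (ls : seq (label n)) d j : j \notin ups ls ->
  forall q, (q < size ls)%N -> nth d ls q <> UpStep j.
Proof.
elim: ls => [|[k|k] ls IH] //= Hj [|q] Hq //=.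
- by move: Hj; rewrite inE => /norP [/eqP Hk _] [E]; apply: Hk.
- by move: Hj; rewrite inE => /norP [_ Hj]; apply: IH.
- by apply: IH.
Qed.

Definition ex2pos n (ls : seq (label n)) (i j : 'I_n) :=
  exists p q, [/\ (p < q)%N, nth (UpStep i) ls p = UpStep i & nth (UpStep i) ls q = UpStep j].

Lemma ex2pos_shift n (h : label n) ls (i j : 'I_n) : h <> UpStep i ->
  ex2pos (h :: ls) i j <-> ex2pos ls i j.
Proof.
move=> Hh; split.
- case=> [[|p] [[|q] [Hpq Hp Hq]]] //=.
  by exists p, q.
- case=> [p [q [Hpq Hp Hq]]]; by exists p.+1, q.+1.
Qed.

Lemma order_ups n (ls : seq (label n)) (i j : 'I_n) :
  uniq (ups ls) -> i \in ups ls -> j \in ups ls -> i != j ->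
  (index i (ups ls) < index j (ups ls))%N <-> ex2pos ls i j.
Proof.
elim: ls => [|[k|k] ls IH] //= HU Hi Hj Hij.
- move: HU => /andP [kU HU].
  case: (k =P i) => [Eki|Nki].
  + subst k; rewrite (negbTE Hij); split => // _.
    move: Hj; rewrite inE eq_sym (negbTE Hij) /= => Hj.
    have [q [_ Hq]] := ups_in (UpStep i) Hj.
    by exists 0%N, q.+1.
  case: (k =P j) => [Ekj|Nkj].
  + subst k.
    split => //; case=> [p [[|q] [Hpq Hp Hq]]] //=.
    move: Hq => /= Hq.
    case: (ltnP q (size ls)) => Hqs.
    * by have := ups_notin kU Hqs Hq.
    * move: Hq; rewrite nth_default // => [[E]]; move: Hij; rewrite E eqxx. by [].
  +
    move: Hi Hj; rewrite !inE.
    have -> : (i == k) = false by apply/eqP => E; apply: Nki.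
    have -> : (j == k) = false by apply/eqP => E; apply: Nkj.
    move=> /= Hi Hj; rewrite ltnS (IH HU Hi Hj Hij).
    by rewrite ex2pos_shift //; case.
- by rewrite (IH HU Hi Hj Hij) ex2pos_shift.
Qed.

End Part4.


Theorem lemma2p4 (n : nat) (x : 'I_n -> nat) :
  parking_function x ->
  (* termination: there is no infinite run *)
  Acc (fun b a : state n => exists l, astep a l b) (init_state x) /\
  (* no run gets stuck: a run that cannot be extended has reached Stop *)
  (forall r, is_run (init_state x) r ->
     (forall l st', ~ astep (last_state (init_state x) r) l st') ->
     stopped (last_state (init_state x) r)) /\
  (* properties of every completed run *)
  (forall r, is_run (init_state x) r ->
     stopped (last_state (init_state x) r) ->
     let s := (last_state (init_state x) r).1 in
     let ls := map fst r in
     (forall j : 'I_n, count (is_up_with j) ls = 1) /\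
     perm_eq [seq s i | i <- enum 'I_n] [seq (- (k.+1)%:Z)%R | k <- iota 0 n] /\
     (forall i j : 'I_n, i != j ->
        ((`|s j| < `|s i|)%R <->
         exists p q, [/\ p < q, nth (UpStep i) ls p = UpStep i & nth (UpStep i) ls q = UpStep j]))).
Proof.
move=> Hp.
have HI0 := inv_init Hp.
split.
  apply: (@acc_mu n (absz (mu (init_state x)))).
  have := mu_ge0 (init_state x); lia.
split.
  move=> r Hr Hst.
  have HI := inv_run HI0 Hr.
  case: (boolP [forall k, ((last_state (init_state x) r).1 k < 0)%R]) => [/forallP //|Hn].
  exfalso.
  have [l [st' Hs]] := progress HI (fun H => (negP Hn) (introT forallP H)).
  exact: Hst Hs.
move=> r Hr Hstop s ls.
have := inv_run HI0 Hr; rewrite cat0s.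
rewrite -/s -/ls.
set U := ups ls.
case=> [HU Hneg Hval Hcnt].
have allU : forall k, k \in U by move=> k; rewrite -Hneg; apply: Hstop.
have Hperm : perm_eq U (enum 'I_n).
  by apply: uniq_perm => //; [exact: enum_uniq | move=> k; rewrite allU mem_enum].
have HsU : size U = n by rewrite (perm_size Hperm) size_enum_ord.
pose ix := fun k : 'I_n => index k U.
have Hidx : forall k, (ix k < n)%N by move=> k; rewrite /ix -[X in (_ < X)%N]HsU index_mem.
have Hs : forall k, s k = (- (n - ix k)%:Z)%R by move=> k; rewrite /s Hval // HsU.
split.
  by move=> j; rewrite count_ups count_uniq_mem // allU.
split.
  set L := [seq s i | i <- enum 'I_n].
  set R := [seq (- (k.+1)%:Z)%R | k <- iota 0 n].
  have uL : uniq L.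
    rewrite map_inj_uniq ?enum_uniq // => a b; rewrite !Hs => E.
    move/oppr_inj: E => [E].
    have Eab : ix a = ix b by have := Hidx a; have := Hidx b; lia.
    by rewrite -(nth_index a (allU a)) -(nth_index a (allU b)) -/(ix a) -/(ix b) Eab.
  have sub : {subset L <= R}.
    move=> y /mapP [i _ ->]; apply/mapP; exists (n - (ix i).+1)%N.
      by rewrite mem_iota; have := Hidx i; lia.
    by rewrite Hs; have := Hidx i; lia.
  have szR : (size R <= size L)%N.
    by rewrite /R /L !size_map size_iota -enumT -cardT card_ord.
  apply: uniq_perm => //; first exact: leq_size_uniq uL sub szR.
  exact: (uniq_min_size uL sub szR).2.
move=> i j Hij.
have -> : (`|s j| < `|s i|)%R = (ix i < ix j)%N.
  rewrite !Hs !normrN; have := Hidx i; have := Hidx j => ? ?; apply/idP/idP; lia.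
exact: order_ups.
Qed.
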